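(* Let $A=\{a,b_1,b_2,b_3,c_1,c_2,c_3,d_1,d_2,d_3\}$ and let $M$ be the monoid presented by $\langle A\mid b_ia=ab_i\ (i=1,2,3),\ c_jb_j=c_1b_1\ (j=2,3),\ b_jd_j=b_1d_1\ (j=2,3)\rangle$. Then $M$ is biautomatic (and hence automatic).
   Context: Automatic/biautomatic: for a finite generating alphabet $A$ of $M$ and regular $L\subseteq A^*$ mapping onto $M$, set $L_a=\{(u,v)\in L^2: ua=_Mv\}$, ${}_aL=\{(u,v)\in L^2: au=_Mv\}$ ($a\in A\cup\{\varepsilon\}$); $\delta_R$ ($\delta_L$) converts a pair of words into a word over pairs of letters by padding the shorter word at the end (beginning) with a new symbol $\$$. $M$ is automatic if for some such $(A,L)$ all $L_a\delta_R$ are regular; biautomatic if for some such $(A,L)$ all $L_a\delta_R,{}_aL\delta_R,L_a\delta_L,{}_aL\delta_L$ are regular. *)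

(* Defs.v *)
From mathcomp Require Import all_boot.
From Stdlib Require Import Relations.
Set Implicit Arguments. Unset Strict Implicit. Unset Printing Implicit Defensive.

Definition regular (T : finType) (L : seq T -> Prop) : Prop :=
  exists (Q : finType) (q0 : Q) (d : Q -> T -> Q) (F : pred Q),
    forall w, L w <-> F (foldl d q0 w).

Inductive rstep (A : Type) (R : seq A -> seq A -> Prop) : seq A -> seq A -> Prop :=
| rstep_intro u v l r : R l r -> rstep R (u ++ l ++ v) (u ++ r ++ v).

Definition eqM (A : Type) (R : seq A -> seq A -> Prop) : seq A -> seq A -> Prop :=
  clos_refl_sym_trans (seq A) (rstep R).

(** Padding: None plays the role of the new symbol $. *)
Definition deltaR (B : Type) (u v : seq B) : seq (option B * option B) :=
  let n := maxn (size u) (size v) in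
  zip (map Some u ++ nseq (n - size u) None) (map Some v ++ nseq (n - size v) None).

Definition deltaL (B : Type) (u v : seq B) : seq (option B * option B) :=
  let n := maxn (size u) (size v) in
  zip (nseq (n - size u) None ++ map Some u) (nseq (n - size v) None ++ map Some v).

Definition padlang (B : Type) (pad : seq B -> seq B -> seq (option B * option B))
  (P : seq B -> seq B -> Prop) : seq (option B * option B) -> Prop :=
  fun w => exists u v, P u v /\ w = pad u v.

(** A generating alphabet of M = <A|R> is a finite type B with a map
    phi : B -> M, each letter sent to (the class of) a word over A. *)
Definition evalw (A : Type) (B : Type) (phi : B -> seq A) (u : seq B) : seq A :=
  flatten (map phi u).

(** a : option B, with None standing for the empty word epsilon. *)
Definition letter (B : Type) (a : option B) : seq B :=
  if a is Some b then [:: b] else [::].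

Definition Lright (A : Type) (R : seq A -> seq A -> Prop) (B : Type) (phi : B -> seq A)
  (L : seq B -> Prop) (a : option B) (u v : seq B) : Prop :=
  L u /\ L v /\ eqM R (evalw phi (u ++ letter a)) (evalw phi v).

Definition Lleft (A : Type) (R : seq A -> seq A -> Prop) (B : Type) (phi : B -> seq A)
  (L : seq B -> Prop) (a : option B) (u v : seq B) : Prop :=
  L u /\ L v /\ eqM R (evalw phi (letter a ++ u)) (evalw phi v).

Definition maps_onto (A : Type) (R : seq A -> seq A -> Prop) (B : Type) (phi : B -> seq A)
  (L : seq B -> Prop) : Prop :=
  forall w : seq A, exists u, L u /\ eqM R (evalw phi u) w.

Definition automatic (A : Type) (R : seq A -> seq A -> Prop) : Prop :=
  exists (B : finType) (phi : B -> seq A) (L : seq B -> Prop),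
    regular L /\ maps_onto R phi L /\
    forall a : option B, regular (padlang (@deltaR B) (Lright R phi L a)).

Definition biautomatic (A : Type) (R : seq A -> seq A -> Prop) : Prop :=
  exists (B : finType) (phi : B -> seq A) (L : seq B -> Prop),
    regular L /\ maps_onto R phi L /\
    forall a : option B,
      [/\ regular (padlang (@deltaR B) (Lright R phi L a)),
          regular (padlang (@deltaR B) (Lleft R phi L a)),
          regular (padlang (@deltaL B) (Lright R phi L a)) &
          regular (padlang (@deltaL B) (Lleft R phi L a))].

Inductive gen : Type :=
| ga | gb1 | gb2 | gb3 | gc1 | gc2 | gc3 | gd1 | gd2 | gd3.

Inductive M_rel : seq gen -> seq gen -> Prop :=
| rel_b1a : M_rel [:: gb1; ga] [:: ga; gb1]
| rel_b2a : M_rel [:: gb2; ga] [:: ga; gb2]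
| rel_b3a : M_rel [:: gb3; ga] [:: ga; gb3]
| rel_c2b2 : M_rel [:: gc2; gb2] [:: gc1; gb1]
| rel_c3b3 : M_rel [:: gc3; gb3] [:: gc1; gb1]
| rel_b2d2 : M_rel [:: gb2; gd2] [:: gb1; gd1]
| rel_b3d3 : M_rel [:: gb3; gd3] [:: gb1; gd1].

(* Main.v *)
Require Import Defs.
From mathcomp Require Import all_boot.
From Stdlib Require Import Setoid Relations.
From HB Require Import structures.
Set Implicit Arguments. Unset Strict Implicit. Unset Printing Implicit Defensive.

Section Reg.
Variable T : finType.
Implicit Types P Q : seq T -> Prop.

Lemma regular_ext P Q : (forall w, P w <-> Q w) -> regular P -> regular Q.
Proof.
move=> PQ [S [q0 [d [F H]]]]; exists S, q0, d, F => w; split=> [/PQ/H|/H/PQ] //.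
Qed.

Lemma regular_and P Q : regular P -> regular Q -> regular (fun w => P w /\ Q w).
Proof.
move=> [S1 [q1 [d1 [F1 H1]]]] [S2 [q2 [d2 [F2 H2]]]].
exists (S1 * S2)%type, (q1, q2), (fun q t => (d1 q.1 t, d2 q.2 t)),
  (fun q => F1 q.1 && F2 q.2) => w.
have E : forall p1 p2, foldl (fun q t => (d1 q.1 t, d2 q.2 t)) (p1, p2) w
   = (foldl d1 p1 w, foldl d2 p2 w).
  by elim: w => //= t w IH p1 p2; rewrite IH.
rewrite E /= H1 H2; split; first by case=> -> ->.
by case/andP.
Qed.

Lemma regular_or P Q : regular P -> regular Q -> regular (fun w => P w \/ Q w).
Proof.
move=> [S1 [q1 [d1 [F1 H1]]]] [S2 [q2 [d2 [F2 H2]]]].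
exists (S1 * S2)%type, (q1, q2), (fun q t => (d1 q.1 t, d2 q.2 t)),
  (fun q => F1 q.1 || F2 q.2) => w.
have E : forall p1 p2, foldl (fun q t => (d1 q.1 t, d2 q.2 t)) (p1, p2) w
   = (foldl d1 p1 w, foldl d2 p2 w).
  by elim: w => //= t w IH p1 p2; rewrite IH.
rewrite E /= H1 H2; split; first by case=> ->; rewrite ?orbT.
by case/orP; [left|right].
Qed.

Lemma regular_all (p : pred T) : regular (fun w => all p w).
Proof.
exists bool, true, (fun b t => b && p t), id => w /=.
have E : forall b, foldl (fun b t => b && p t) b w = b && all p w.
  by elim: w => //= [b|t w IH b]; rewrite ?andbT // IH andbA.
by rewrite E.
Qed.

Lemma regular_lit (t0 : T) : regular (fun w => w = [:: t0]).
Proof.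
pose d (q : option bool) t := if q == Some false then (if t == t0 then Some true else None) else None.
exists (option bool), (Some false), d, (fun q => q == Some true) => w.
have N : forall w, foldl d None w = None by elim=> //.
case: w => [|t [|t' w]] /=; first by split.
  rewrite /d /=; case: (t =P t0) => [->|ne]; first by split.
  by split=> // -[].
rewrite /d /=; case: (t =P t0) => _ /=; rewrite N; by split.
Qed.

Lemma regular_rev P : regular P -> regular (fun w => P (rev w)).
Proof.
move=> [S [q0 [d [F H]]]].
exists {set S}%type, [set q | F q], (fun (X : {set S}) t => [set q | d q t \in X]),
  (fun (X : {set S}) => q0 \in X) => w.
have E : forall q, (q \in foldl (fun (X : {set S}) t => [set q | d q t \in X]) [set q | F q] w)
   = F (foldl d q (rev w)).
  elim/last_ind: w => [|w t IH] q; first by rewrite inE.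
  by rewrite -cats1 foldl_cat /= inE IH rev_cat /=.
by rewrite E H.
Qed.

Lemma regular_pmap (T' : finType) (f : T' -> option T) P :
  regular P -> regular (fun w : seq T' => P (pmap f w)).
Proof.
move=> [S [q0 [d [F H]]]].
exists S, q0, (fun q t => if f t is Some x then d q x else q), F => w.
have E : forall q, foldl (fun q t => if f t is Some x then d q x else q) q w
    = foldl d q (pmap f w).
  elim: w => //= t w IH q; rewrite IH; by case: (f t).
by rewrite E H.
Qed.

Lemma regular_cat P Q : regular P -> regular Q ->
  regular (fun w => exists w1 w2, w = w1 ++ w2 /\ P w1 /\ Q w2).
Proof.
move=> [S1 [q1 [d1 [F1 H1]]]] [S2 [q2 [d2 [F2 H2]]]].
pose tr (st : S1 * {set S2}) t :=
  (d1 st.1 t, [set d2 q t | q in st.2] :|: (if F1 (d1 st.1 t) then [set q2] else set0)).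
pose st0 : S1 * {set S2} := (q1, if F1 q1 then [set q2] else set0).
exists (S1 * {set S2})%type, st0, tr, (fun st : S1 * {set S2} => [exists q in st.2, F2 q]) => w0.
have E : forall w : seq T, (foldl tr st0 w).1 = foldl d1 q1 w /\
   forall q, q \in (foldl tr st0 w).2 <->
     exists w1 w2, w = w1 ++ w2 /\ P w1 /\ q = foldl d2 q2 w2.
  elim/last_ind => [|w t [IH1 IH2]].
    split=> // q /=; split.
      by case: ifP => F; rewrite ?inE // => /eqP ->; exists [::], [::]; rewrite H1.
    move=> [[|? ?] [[|? ?] [//= _ [P1 ->]]]]; move: P1; rewrite H1 /= => ->.
    by rewrite inE.
  rewrite -cats1 foldl_cat /= IH1; split=> [|q]; first by rewrite foldl_cat.
  rewrite inE; split.
    case/orP.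
      case/imsetP=> q' /(proj1 (IH2 _)) [w1 [w2 [-> [P1 ->]]]] ->.
      by exists w1, (w2 ++ [:: t]); rewrite catA foldl_cat.
    have -> : d1 (foldl d1 q1 w) t = foldl d1 q1 (w ++ [:: t]) by rewrite foldl_cat.
    case: ifP; rewrite ?inE // => F /eqP ->.
    by exists (w ++ [:: t]), [::]; rewrite cats0 H1.
  move=> [w1 [w2 [E [P1 ->]]]].
  case/lastP: w2 E => [|w2 t2]; rewrite ?cats0 => E.
    apply/orP; right; have -> : d1 (foldl d1 q1 w) t = foldl d1 q1 (w ++ [:: t]) by rewrite foldl_cat.
    move: P1; rewrite H1 -E => ->; by rewrite inE.
  have [E1 E2] : w = w1 ++ w2 /\ t = t2.
    by move/eqP: E; rewrite cats1 -rcons_cat eqseq_rcons => /andP[/eqP -> /eqP ->].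
  apply/orP; left; apply/imsetP; exists (foldl d2 q2 w2).
    by apply (proj2 (IH2 _)); exists w1, w2.
  by rewrite -cats1 foldl_cat E2.
have [_ E2] := E w0; split.
  move=> [w1 [w2 [Ew [P1 Q2]]]]; apply/exists_inP; exists (foldl d2 q2 w2).
    apply (proj2 (E2 _)); by exists w1, w2.
  by rewrite -H2.
move=> /exists_inP [q /(proj1 (E2 _)) [w1 [w2 [-> [P1 Eq]]]]]; rewrite Eq -H2 => Q2.
by exists w1, w2.
Qed.

End Reg.

Section Pad.
Variable B : finType.
Notation T := (option B * option B)%type.
Implicit Types u v : seq B.

Lemma sizeR_ok u v :
  size ([seq Some x | x <- u] ++ nseq (maxn (size u) (size v) - size u) None) =
  size ([seq Some x | x <- v] ++ nseq (maxn (size u) (size v) - size v) None).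
Proof.
by rewrite !size_cat !size_nseq !size_map !subnKC ?leq_maxl ?leq_maxr.
Qed.

Lemma sizeL_ok u v :
  size (nseq (maxn (size u) (size v) - size u) None ++ [seq Some x | x <- u]) =
  size (nseq (maxn (size u) (size v) - size v) None ++ [seq Some x | x <- v]).
Proof. by rewrite !size_cat !size_nseq !size_map !subnK ?leq_maxl ?leq_maxr. Qed.

Lemma deltaR_cat u1 u2 v1 v2 : size u1 = size v1 ->
  deltaR (u1 ++ u2) (v1 ++ v2) = deltaR u1 v1 ++ deltaR u2 v2.
Proof.
move=> E; rewrite /deltaR !size_cat E maxnn subnn /= -addn_maxr.
rewrite !subnDl !map_cat -!catA !cats0 zip_cat //; by rewrite !size_map.
Qed.

Lemma deltaL_cat u1 u2 v1 v2 : size u2 = size v2 ->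
  deltaL (u1 ++ u2) (v1 ++ v2) = deltaL u1 v1 ++ deltaL u2 v2.
Proof.
move=> E; rewrite /deltaL !size_cat E maxnn subnn /= -addn_maxl.
rewrite !subnDr !map_cat !catA zip_cat ?cats0 //.
by rewrite sizeL_ok.
Qed.

Lemma deltaR_diag u : deltaR u u = [seq (Some t, Some t) | t <- u].
Proof. by rewrite /deltaR maxnn subnn /= !cats0 zip_map. Qed.

Lemma deltaL_diag u : deltaL u u = [seq (Some t, Some t) | t <- u].
Proof. by rewrite /deltaL maxnn subnn /= zip_map. Qed.

Lemma deltaLR u v : size u = size v -> deltaL u v = deltaR u v.
Proof. by move=> E; rewrite /deltaL /deltaR E maxnn subnn /= !cats0. Qed.

Lemma pmap_id_some (s : seq B) k :
  pmap id ([seq Some x | x <- s] ++ nseq k None) = s.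
Proof. by elim: s => [|x s IH] /=; [elim: k | rewrite IH]. Qed.

Lemma pmap_id_some' (s : seq B) k :
  pmap id (nseq k None ++ [seq Some x | x <- s]) = s.
Proof. by elim: k => [|k IH] //=; elim: s => [|x s IH] //= ; rewrite IH. Qed.

Lemma pmap_fst_zip (s t : seq (option B)) : size s = size t ->
  pmap (fun p : T => p.1) (zip s t) = pmap id s.
Proof. by elim: s t => [|x s IH] [|y t] //= [/IH ->]; case: x. Qed.

Lemma pmap_snd_zip (s t : seq (option B)) : size s = size t ->
  pmap (fun p : T => p.2) (zip s t) = pmap id t.
Proof. by elim: s t => [|x s IH] [|y t] //= [/IH ->]; case: y. Qed.

Lemma fst_deltaR u v : pmap (fun p : T => p.1) (deltaR u v) = u.
Proof. by rewrite /deltaR pmap_fst_zip ?sizeR_ok // pmap_id_some. Qed.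
Lemma snd_deltaR u v : pmap (fun p : T => p.2) (deltaR u v) = v.
Proof. by rewrite /deltaR pmap_snd_zip ?sizeR_ok // pmap_id_some. Qed.
Lemma fst_deltaL u v : pmap (fun p : T => p.1) (deltaL u v) = u.
Proof. by rewrite /deltaL pmap_fst_zip ?sizeL_ok // pmap_id_some'. Qed.
Lemma snd_deltaL u v : pmap (fun p : T => p.2) (deltaL u v) = v.
Proof. by rewrite /deltaL pmap_snd_zip ?sizeL_ok // pmap_id_some'. Qed.

Lemma rev_deltaL u v : rev (deltaL u v) = deltaR (rev u) (rev v).
Proof.
rewrite /deltaL /deltaR rev_zip ?sizeL_ok // !size_rev !rev_cat !map_rev.
by rewrite !rev_nseq.
Qed.

Lemma pad_frame (pad : seq B -> seq B -> seq T)
  (Hf : forall u v, pmap (fun p : T => p.1) (pad u v) = u)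
  (Hs : forall u v, pmap (fun p : T => p.2) (pad u v) = v)
  (A : seq B -> Prop) (E : seq B -> seq B -> Prop) (Q : seq T -> Prop) :
  regular A -> regular Q ->
  (forall w, Q w -> exists u v, w = pad u v /\ E u v) ->
  (forall u v, A u -> A v -> E u v -> Q (pad u v)) ->
  regular (padlang pad (fun u v => A u /\ A v /\ E u v)).
Proof.
move=> RA RQ S C.
have R1 := regular_pmap (fun p : T => p.1) RA.
have R2 := regular_pmap (fun p : T => p.2) RA.
apply: regular_ext (regular_and RQ (regular_and R1 R2)) => w; split.
  move=> [QW [A1 A2]]; have [u [v [Ew Euv]]] := S w QW.
  exists u, v; split=> //; move: A1 A2; rewrite Ew Hf Hs; by split.
move=> [u [v [[Au [Av Euv]] ->]]]; rewrite Hf Hs; split=> //; exact: C.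
Qed.

Definition dg (S : pred B) (p : T) :=
  match p with (Some x, Some y) => (x == y) && S x | _ => false end.

Lemma diag_all (S : pred B) w :
  (exists p, all S p /\ w = [seq (Some t, Some t) | t <- p]) <-> all (dg S) w.
Proof.
split.
  move=> [p [Sp ->]]; elim: p Sp => //= x p IH /andP [Sx Sp].
  by rewrite eqxx Sx IH.
elim: w => [|[[x|] [y|]] w IH] //=; first by exists [::].
case/andP=> /andP [/eqP <- Sx] /IH [p [Sp ->]]; exists (x :: p) => /=.
by rewrite Sx Sp.
Qed.

Lemma regular_diag (S : pred B) :
  regular (fun w => exists p, all S p /\ w = [seq (Some t, Some t) | t <- p]).
Proof.
apply: regular_ext (regular_all (dg S)) => w; by rewrite diag_all.
Qed.

Lemma maxnSn n : maxn n n.+1 = n.+1.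
Proof. by apply/maxn_idPr. Qed.

Definition shiftw (w : seq T) : seq T :=
  zip (belast None [seq p.1 | p <- w]) [seq p.2 | p <- w].

Lemma regular_shift (P : seq T -> Prop) : regular P ->
  regular (fun w => P (shiftw w) /\ last None [seq p.1 | p <- w] = None).
Proof.
move=> [S [q0 [d [F H]]]].
pose tr (st : S * option B) (t : T) := (d st.1 (st.2, t.2), t.1).
exists (S * option B)%type, (q0, None), tr,
  (fun st : S * option B => F st.1 && (st.2 == None)) => w.
have E : foldl tr (q0, None) w = (foldl d q0 (shiftw w), last None [seq p.1 | p <- w]).
  elim/last_ind: w => [|w t IH] //.
  rewrite -cats1 foldl_cat IH /shiftw !map_cat /= !cats1 belast_rcons lastI.
  by rewrite zip_rcons ?size_belast ?size_map // -cats1 foldl_cat /= last_rcons.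
rewrite E /= H; split; first by case=> -> ->.
by case/andP=> -> /eqP.
Qed.

Lemma pad_LR (P : seq B -> seq B -> Prop) :
  (forall u v, P u v -> size v = (size u).+1) ->
  regular (padlang (@deltaL B) P) -> regular (padlang (@deltaR B) P).
Proof.
move=> Hsz /regular_shift R; apply: regular_ext R => w; split.
  move=> [[u [v [Puv Ew]]] Hl].
  have Sv := Hsz _ _ Puv.
  have Ew' : shiftw w = zip (None :: [seq Some x | x <- u]) [seq Some x | x <- v].
    by rewrite Ew /deltaL Sv maxnSn subnn subSnn.
  exists u, v; split=> //.
  have Hw : size w = size v.
    have := f_equal size Ew'; rewrite /shiftw !size_zip size_belast !size_map minnn.
    by rewrite /= size_map Sv minnn.
  have E2 : [seq p.2 | p <- w] = [seq Some x | x <- v].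
    have := f_equal unzip2 Ew'; rewrite /shiftw !unzip2_zip ?size_belast ?size_map //.
    by rewrite /= size_map Sv.
  have E1 : belast None [seq p.1 | p <- w] = None :: [seq Some x | x <- u].
    have := f_equal unzip1 Ew'; rewrite /shiftw !unzip1_zip ?size_belast ?size_map //.
    by rewrite /= size_map Sv.
  have E1' : [seq p.1 | p <- w] = [seq Some x | x <- u] ++ [:: None].
    case: w Hl E1 {Ew Ew' Hw E2} => [|t w] //= Hl.
    move=> E1; rewrite lastI Hl; rewrite -cats1; congr (_ ++ _).
    by case: E1.
  rewrite -[w]zip_unzip /unzip1 /unzip2 E1' E2 /deltaR Sv maxnSn subnn subSnn /=.
  by rewrite cats0.
move=> [u [v [Puv ->]]]; have Sv := Hsz _ _ Puv.
rewrite /deltaR /deltaL Sv maxnSn subnn subSnn /= !cats0; split.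
  exists u, v; split=> //.
  rewrite /shiftw -/(unzip1 _) -/(unzip2 _) unzip1_zip ?unzip2_zip;
    try by rewrite size_cat !size_map Sv addn1.
  by rewrite /deltaL Sv maxnSn subnn subSnn /= cats1 belast_rcons.
rewrite -/(unzip1 _) unzip1_zip; last by rewrite size_cat !size_map Sv addn1.
by rewrite last_cat.
Qed.

Lemma padL_rev (P : seq B -> seq B -> Prop) w :
  padlang (@deltaL B) P w <-> padlang (@deltaR B) (fun u v => P (rev u) (rev v)) (rev w).
Proof.
split.
  move=> [u [v [Puv ->]]]; exists (rev u), (rev v); rewrite !revK rev_deltaL; by split.
move=> [u [v [Puv Ew]]]; exists (rev u), (rev v); split=> //.
by apply: (can_inj (@revK _)); rewrite rev_deltaL !revK.
Qed.

Lemma pad_RL (P : seq B -> seq B -> Prop) :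
  (forall u v, P u v -> size v = (size u).+1) ->
  regular (padlang (@deltaR B) P) -> regular (padlang (@deltaL B) P).
Proof.
move=> Hsz R.
pose P' := fun u v => P (rev u) (rev v).
have R1 : regular (padlang (@deltaL B) P').
  apply: regular_ext (regular_rev R) => w.
  rewrite padL_rev /P'; split; move=> [u [v [H E]]]; exists u, v;
    by move: H; rewrite !revK.
have R2 : regular (padlang (@deltaR B) P').
  apply: pad_LR R1 => u v /Hsz; by rewrite !size_rev.
apply: regular_ext (regular_rev R2) => w; by rewrite padL_rev.
Qed.

Lemma pad_eqsize (P : seq B -> seq B -> Prop) :
  (forall u v, P u v -> size v = size u) ->
  regular (padlang (@deltaR B) P) -> regular (padlang (@deltaL B) P).
Proof.
move=> Hsz; apply: regular_ext => w; split; move=> [u [v [H ->]]]; exists u, v;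
  rewrite deltaLR //; by rewrite (Hsz _ _ H).
Qed.

End Pad.

Definition g2n (g : gen) : nat :=
  match g with ga => 0 | gb1 => 1 | gb2 => 2 | gb3 => 3 | gc1 => 4 | gc2 => 5
  | gc3 => 6 | gd1 => 7 | gd2 => 8 | gd3 => 9 end.
Definition n2g (n : nat) : option gen :=
  match n with 0 => Some ga | 1 => Some gb1 | 2 => Some gb2 | 3 => Some gb3
  | 4 => Some gc1 | 5 => Some gc2 | 6 => Some gc3 | 7 => Some gd1 | 8 => Some gd2
  | 9 => Some gd3 | _ => None end.
Lemma g2nK : pcancel g2n n2g. Proof. by case. Qed.
HB.instance Definition _ := Countable.copy gen (pcan_type g2nK).
Definition gen_enum := [:: ga; gb1; gb2; gb3; gc1; gc2; gc3; gd1; gd2; gd3].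
Lemma gen_enumP : Finite.axiom gen_enum. Proof. by case. Qed.
HB.instance Definition _ := isFinite.Build gen gen_enumP.


Notation EQ := (eqM M_rel).

Lemma EQ_refl x : EQ x x. Proof. exact: rst_refl. Qed.
Lemma EQ_sym x y : EQ x y -> EQ y x. Proof. exact: rst_sym. Qed.
Lemma EQ_trans x y z : EQ x y -> EQ y z -> EQ x z. Proof. exact: rst_trans. Qed.

Lemma rstep_ctx (A : Type) (R : seq A -> seq A -> Prop) p q x y :
  rstep R x y -> rstep R (p ++ x ++ q) (p ++ y ++ q).
Proof.
case=> u v l r H.
have -> : p ++ (u ++ l ++ v) ++ q = (p ++ u) ++ l ++ (v ++ q) by rewrite !catA.
have -> : p ++ (u ++ r ++ v) ++ q = (p ++ u) ++ r ++ (v ++ q) by rewrite !catA.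
by constructor.
Qed.

Lemma EQ_ctx p q x y : EQ x y -> EQ (p ++ x ++ q) (p ++ y ++ q).
Proof.
elim=> [x' y' H|x'|x' y' _ IH|x' y' z' _ IH1 _ IH2].
- by apply: rst_step; apply: rstep_ctx.
- exact: EQ_refl.
- exact: EQ_sym.
- exact: EQ_trans IH1 IH2.
Qed.

Lemma EQ_cat x x' y y' : EQ x x' -> EQ y y' -> EQ (x ++ y) (x' ++ y').
Proof.
move=> H1 H2; apply: (@EQ_trans _ (x' ++ y)).
  by have := EQ_ctx [::] y H1; rewrite /=.
by have := EQ_ctx x' [::] H2; rewrite !cats0.
Qed.

Lemma EQ_consl t x y : EQ x y -> EQ (t :: x) (t :: y).
Proof. by move=> H; apply: (EQ_cat (EQ_refl [:: t]) H). Qed.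

Lemma EQ_rel l r : M_rel l r -> EQ l r.
Proof.
move=> H; apply: rst_step; have := rstep_intro [::] [::] H; by rewrite /= !cats0.
Qed.

Lemma rel_size l r : M_rel l r -> size l = size r. Proof. by case. Qed.

Lemma EQ_size x y : EQ x y -> size x = size y.
Proof.
elim=> [x' y' [u v l r H]|//|//|x' y' z' _ -> _ ->] //.
by rewrite !size_cat (rel_size H).
Qed.

Definition isa t := if t is ga then true else false.
Definition isb t := match t with gb1 | gb2 | gb3 => true | _ => false end.
Definition isc t := match t with gc1 | gc2 | gc3 => true | _ => false end.
Definition isd t := match t with gd1 | gd2 | gd3 => true | _ => false end.
Definition idx t := match t with ga => 0 | gb1 | gc1 | gd1 => 1 | gb2 | gc2 | gd2 => 2
  | gb3 | gc3 | gd3 => 3 end.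
Definition cL n := match n with 1 => gc1 | 2 => gc2 | _ => gc3 end.

Lemma EQ_ba t : isb t -> EQ [:: t; ga] [:: ga; t].
Proof. by case: t => // _; apply: EQ_rel; constructor. Qed.

Lemma EQ_bak t k : isb t -> EQ (t :: nseq k ga) (nseq k ga ++ [:: t]).
Proof.
move=> bt; elim: k => [|k IH] /=; first exact: EQ_refl.
apply: (@EQ_trans _ ([:: ga; t] ++ nseq k ga)).
  by apply: (EQ_cat (EQ_ba bt) (EQ_refl _)).
by apply: EQ_consl.
Qed.

Lemma EQ_bsa bs : all isb bs -> EQ (bs ++ [:: ga]) (ga :: bs).
Proof.
elim: bs => [|t bs IH] /=; first by move=> _; exact: EQ_refl.
case/andP=> bt /IH H.
apply: (@EQ_trans _ (t :: ga :: bs)); first exact: EQ_consl.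
by apply: (EQ_cat (EQ_ba bt) (EQ_refl bs)).
Qed.

Lemma EQ_cb b c : isb b -> isc c -> idx b = idx c -> EQ [:: c; b] [:: gc1; gb1].
Proof.
by case: b; case: c => // _ _ _; try exact: EQ_refl; apply: EQ_rel; constructor.
Qed.

Lemma EQ_bd b d : isb b -> isd d -> idx b = idx d -> EQ [:: b; d] [:: gb1; gd1].
Proof.
by case: b; case: d => // _ _ _; try exact: EQ_refl; apply: EQ_rel; constructor.
Qed.

Lemma EQ_cab b c k : isb b -> isc c -> idx b = idx c ->
  EQ (c :: nseq k ga ++ [:: b]) (gc1 :: nseq k ga ++ [:: gb1]).
Proof.
move=> bb cc E.
apply: (@EQ_trans _ (c :: b :: nseq k ga)).
  by apply: EQ_consl; apply: EQ_sym; apply: EQ_bak.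
apply: (@EQ_trans _ (gc1 :: gb1 :: nseq k ga)).
  by apply: (EQ_cat (EQ_cb bb cc E) (EQ_refl (nseq k ga))).
by apply: EQ_consl; apply: EQ_bak.
Qed.

Fixpoint cnta (s : seq gen) := if s is ga :: s' then (cnta s').+1 else 0.
Fixpoint dropa (s : seq gen) := if s is ga :: s' then dropa s' else s.
Definition noA (p : seq gen) := if p is ga :: _ then false else true.

Lemma nseq_dropa s : s = nseq (cnta s) ga ++ dropa s.
Proof. by elim: s => [|[] s IH] //=; rewrite -IH. Qed.
Lemma noA_dropa s : noA (dropa s). Proof. by elim: s => [|[] s IH]. Qed.
Lemma cnta_cat k p : noA p -> cnta (nseq k ga ++ p) = k.
Proof. by elim: k => [|k IH] /=; [case: p => [|[]]|move=> /IH ->]. Qed.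
Lemma dropa_cat k p : noA p -> dropa (nseq k ga ++ p) = p.
Proof. by elim: k => [|k IH] /=; [case: p => [|[]]|move=> /IH ->]. Qed.

Definition lb t p :=
  match p with
  | d :: q => if isd d && (idx d == idx t) && (idx t != 1) then gb1 :: gd1 :: q else t :: p
  | [::] => [:: t]
  end.

Definition lc t k p :=
    match p with
    | y :: q => if isb y && (idx y == idx t) then
        match q with
        | z :: q' => if isd z && (idx z != 1) then cL (idx z) :: nseq k ga ++ gb1 :: gd1 :: q'
                     else gc1 :: nseq k ga ++ gb1 :: q
        | [::] => gc1 :: nseq k ga ++ gb1 :: q
        end
      else t :: nseq k ga ++ p
    | [::] => t :: nseq k ga ++ p
    end.

Definition lmk t k p :=
  match t with
  | gb1 | gb2 | gb3 => nseq k ga ++ lb t p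
  | gc1 | gc2 | gc3 => lc t k p
  | _ => t :: nseq k ga ++ p
  end.

Definition lm t s := lmk t (cnta s) (dropa s).
Arguments lm : simpl never.

Lemma lm_nseq t k p : noA p -> lm t (nseq k ga ++ p) = lmk t k p.
Proof. by move=> np; rewrite /lm cnta_cat // dropa_cat. Qed.

Definition bL n := match n with 1 => gb1 | 2 => gb2 | _ => gb3 end.

Lemma EQ_cabd k z q' : isd z ->
  EQ (gc1 :: nseq k ga ++ gb1 :: z :: q') (cL (idx z) :: nseq k ga ++ gb1 :: gd1 :: q').
Proof.
move=> dz.
have H1 : EQ (gc1 :: nseq k ga ++ gb1 :: z :: q') (cL (idx z) :: nseq k ga ++ bL (idx z) :: z :: q').
  have := EQ_cat (EQ_sym (EQ_cab k (_ : isb (bL (idx z))) (_ : isc (cL (idx z))) _)) (EQ_refl (z :: q')).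
  rewrite /= -!catA /=; apply; by case: z dz.
apply: EQ_trans H1 _.
apply: (EQ_cat (EQ_refl (cL (idx z) :: nseq k ga))).
apply: (EQ_cat (EQ_bd (_ : isb (bL (idx z))) dz _) (EQ_refl q')); by case: z dz.
Qed.

Lemma lb_sound b p : isb b -> EQ (b :: p) (lb b p).
Proof.
move=> bb; case: p => [|d q] /=; first exact: EQ_refl.
case: ifP => H; last exact: EQ_refl.
apply: (EQ_cat (EQ_bd bb (_ : isd d) _) (EQ_refl q)); by case: d H => //; case: b bb => //.
Qed.

Lemma lc_sound c k y q : isc c -> isb y -> idx y = idx c ->
  EQ (c :: nseq k ga ++ y :: q) (gc1 :: nseq k ga ++ gb1 :: q).
Proof.
move=> cc yb E; have := EQ_cat (EQ_cab k yb cc E) (EQ_refl q).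
by rewrite /= -!catA.
Qed.

Lemma lmkc_sound c k p : isc c -> EQ (c :: nseq k ga ++ p) (lmk c k p).
Proof.
move=> cc; have -> : lmk c k p = lc c k p by case: c cc.
rewrite /lc; case: p => [|y q]; first exact: EQ_refl.
case: ifP => H; last exact: EQ_refl.
have yb : isb y by case: y H.
have E : idx y = idx c by case/andP: H => _ /eqP.
apply: EQ_trans (lc_sound k q cc yb E) _.
case: q => [|z q']; try exact: EQ_refl.
case: ifP => Hz; try exact: EQ_refl.
by apply: EQ_cabd; case: z Hz.
Qed.

Lemma lmkb_sound b k p : isb b -> EQ (b :: nseq k ga ++ p) (lmk b k p).
Proof.
move=> bb; have -> : lmk b k p = nseq k ga ++ lb b p by case: b bb.
apply: (@EQ_trans _ (nseq k ga ++ b :: p)).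
  by have := EQ_cat (EQ_bak k bb) (EQ_refl p); rewrite -catA.
by apply: (EQ_cat (EQ_refl (nseq k ga))); apply: lb_sound.
Qed.

Lemma lm_sound t s : EQ (t :: s) (lm t s).
Proof.
rewrite {1}[s]nseq_dropa /lm; move: (cnta s) (dropa s) => k p.
case: t; try exact: EQ_refl; try (apply: lmkb_sound; done); apply: lmkc_sound; done.
Qed.

Lemma lm_rel l r s : M_rel l r -> foldr lm s l = foldr lm s r.
Proof.
case=> /=; rewrite /lm /= ?cnta_cat ?dropa_cat //.
all: try apply: noA_dropa.
all: try (by case: (dropa s) => [|[] ?]).
all: move: (cnta s) (dropa s) => k p.
all: case: p => [|y q]; first by [].
all: case: y; case: q => [|z q]; try case: z; by [].
Qed.

Definition nf (w : seq gen) := foldr lm [::] w.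

Lemma nf_rstep x y : rstep M_rel x y -> nf x = nf y.
Proof.
case=> u v l r H; rewrite /nf !foldr_cat; congr (foldr lm _ u); exact: lm_rel.
Qed.

Lemma nf_EQ x y : EQ x y -> nf x = nf y.
Proof. elim=> //; [exact: nf_rstep|move=> *; congruence]. Qed.

Lemma nf_sound w : EQ w (nf w).
Proof.
elim: w => [|t w IH] /=; first exact: EQ_refl.
apply: EQ_trans (EQ_consl t IH) _; exact: lm_sound.
Qed.

Fixpoint ASb (w : seq gen) : bool :=
  if w is t :: s then (lm t s == t :: s) && ASb s else true.

Lemma ASb_nf w : ASb w -> nf w = w.
Proof. by elim: w => //= t w IH /andP [/eqP H /IH ->]. Qed.

Lemma ASb_unique u v : ASb u -> ASb v -> EQ u v -> u = v.
Proof. by move=> /ASb_nf {2}<- /ASb_nf {2}<- /nf_EQ. Qed.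


Definition state := (bool * option gen * option gen * bool)%type.
Definition okq (q : state) := q.1.1.1.
Definition hq (q : state) := q.1.1.2.
Definition fq (q : state) := q.1.2.
Definition gq (q : state) := q.2.

Definition nh t : option gen :=
  match t with ga => Some ga | gd2 => Some gd2 | gd3 => Some gd3 | _ => None end.
Definition nfc t : option gen := if isb t then Some t else None.
Definition hd23 (h : option gen) := match h with Some gd2 | Some gd3 => true | _ => false end.

Definition cond t (h f : option gen) (g : bool) :=
  match t with
  | gb1 | gb2 | gb3 => (h != Some ga) &&
      ~~ ((idx t != 1) && (if h is Some d then isd d && (idx d == idx t) else false))
  | gc1 | gc2 | gc3 => if f is Some y then ~~ (isb y && (idx y == idx t)) || ((idx t == 1) && ~~ g)
                       else true
  | _ => true
  end.

Definition dd (q : state) t : state :=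
  (okq q && cond t (hq q) (fq q) (gq q), nh t,
   if isa t then fq q else nfc t, if isa t then gq q else isb t && hd23 (hq q)).

Definition init : state := (true, None, None, false).
Definition st (w : seq gen) := foldr (fun t q => dd q t) init w.

Lemma stH s : hq (st s) = if s is t :: _ then nh t else None.
Proof. by case: s. Qed.
Lemma stF s : fq (st s) = if dropa s is y :: _ then nfc y else None.
Proof. by elim: s => [|[] s IH]. Qed.
Lemma stG s : gq (st s) =
  if dropa s is y :: q then isb y && hd23 (if q is z :: _ then nh z else None) else false.
Proof. by elim: s => [|[] s IH] //=; rewrite /dd /= stH. Qed.

Lemma K t s : (lm t s == t :: s) = cond t (hq (st s)) (fq (st s)) (gq (st s)).
Proof.
rewrite stH stF stG.
have [k [p [np ->]]] : exists k p, noA p /\ s = nseq k ga ++ p.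
  by exists (cnta s), (dropa s); split; [apply: noA_dropa|apply: nseq_dropa].
rewrite lm_nseq // dropa_cat //.
case: k => [|k] /=.
  case: p np => [|y q] np; first by case: t.
  case: t; case: y np => //= _; case: q => [|z q]; try case: z; rewrite /= ?eqxx //.
case: t => //=; case: p np => [|y q] np; rewrite /= ?eqxx //.
all: case: y np => //= _; rewrite ?eqxx //.
all: case: q => [|z q]; try case: z; rewrite /= ?eqseq_cons ?eqseq_cat ?eqxx //.
Qed.

Lemma st_ok w : okq (st w) = ASb w.
Proof. by elim: w => //= t w IH; rewrite /dd /okq /= -/(okq _) IH K andbC. Qed.

Lemma lm_a s : lm ga s = ga :: s.
Proof. by rewrite /lm /= -nseq_dropa. Qed.
Lemma lm_d d s : isd d -> lm d s = d :: s.
Proof. by case: d => // _; rewrite /lm /= -nseq_dropa. Qed.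
Lemma lm_noA t p : noA p -> lm t p = lmk t 0 p.
Proof. by move=> np; rewrite -(lm_nseq t 0 np). Qed.

Lemma ASb_nseq k X : ASb (nseq k ga ++ X) = ASb X.
Proof. by elim: k => //= k ->; rewrite lm_a eqxx. Qed.

Lemma ASb_noA t p : ASb (t :: p) -> isb t -> noA p.
Proof.
case: p => [|[] p] //=; case: t => //; by rewrite /lm /= eqseq_cons.
Qed.

Lemma ASb_cons t s : ASb (t :: s) = (lm t s == t :: s) && ASb s.
Proof. by []. Qed.

Lemma ASb_lb b y q : isb b -> noA (y :: q) -> ASb (y :: q) -> ASb (lb b (y :: q)).
Proof.
move=> bb np H; case: b bb => // _; case: y np H => //= _ H.
all: rewrite ?ASb_cons lm_noA //= eqxx ?H //=.
all: move: H; rewrite !ASb_cons lm_d // eqxx /=; by case/andP.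
Qed.

Lemma ASb_b1 y q : isb y -> ASb (y :: q) -> ASb (gb1 :: q).
Proof.
move=> yb H; have nq := ASb_noA H yb; move: H; rewrite !ASb_cons lm_noA //.
case/andP=> _ ->; rewrite andbT lm_noA //=.
by case: q nq => [|[] q] //= _; rewrite eqxx.
Qed.

Lemma ASb_b1d1 y z q : ASb (y :: z :: q) -> ASb [:: gb1, gd1 & q].
Proof.
rewrite !ASb_cons => /and3P [_ _ ->]; rewrite [lm gd1 _]lm_d // [lm gb1 _]lm_noA //= !eqxx //.
Qed.

Lemma ASb_lm t s : ASb s -> ASb (lm t s).
Proof.
have [k [p [np ->]]] : exists k p, noA p /\ s = nseq k ga ++ p.
  by exists (cnta s), (dropa s); split; [apply: noA_dropa|apply: nseq_dropa].
rewrite ASb_nseq lm_nseq //.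
case: t => /=.
- by rewrite lm_a eqxx ASb_nseq.
all: try (by move=> H; rewrite ASb_nseq; case: p np H => [|y q] np H //=;
  rewrite lm_noA //= ?eqxx //; case: y np H => //= _ /andP [_ H];
  rewrite ?lm_noA //= ?eqxx ?lm_d //= ?eqxx ?H).
all: try (by move=> H; rewrite lm_d //= eqxx ASb_nseq).
1-3: move=> H; rewrite ASb_nseq; case: p np H => [|y q] np H; first by [].
1-3: by apply: ASb_lb.
all: move=> H; rewrite /lc; case: p np H => [|y q] np H.
all: try (by rewrite ASb_cons lm_nseq //= eqxx ASb_nseq).
all: case: y np H => // _ H; rewrite /=.
all: try (by rewrite ?ASb_cons lm_nseq //= eqxx ASb_nseq H).
all: have nq := ASb_noA H isT.
all: case: q nq H => [|z q] nq H.
all: try (by rewrite ?ASb_cons lm_nseq //= eqxx ASb_nseq).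
all: case: z nq H => // _ H; rewrite /=.
all: rewrite ?ASb_cons lm_nseq //= eqxx ASb_nseq.
all: try (by apply: ASb_b1 H).
all: try (by apply: ASb_b1d1 H).
Qed.

Lemma ASb_nfw w : ASb (nf w).
Proof. elim: w => //= t w IH; exact: ASb_lm. Qed.


Section Comb.
Variable B : finType.
Notation T := (option B * option B)%type.
Notation rl := (seq B -> seq B -> Prop).

Lemma regular_nil : regular (fun w : seq T => w = [::]).
Proof.
apply: regular_ext (regular_all (T:=T) xpred0) => w.
by case: w => //=; split.
Qed.

Lemma regular_word (c : seq T) : regular (fun w => w = c).
Proof.
elim: c => [|t c IH]; first exact: regular_nil.
apply: regular_ext (regular_cat (regular_lit t) IH) => w; split.
  by move=> [w1 [w2 [-> [-> ->]]]].
by move=> ->; exists [:: t], c.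
Qed.

Definition RCat (P1 P2 : rl) : rl := fun u v =>
  exists u1 u2 v1 v2, u = u1 ++ u2 /\ v = v1 ++ v2 /\ P1 u1 v1 /\ P2 u2 v2.
Definition ROr (P1 P2 : rl) : rl := fun u v => P1 u v \/ P2 u v.
Definition RW (x y : seq B) : rl := fun u v => u = x /\ v = y.
Definition RD (S : pred B) : rl := fun u v => all S u /\ v = u.

Definition sizeeq (P : rl) := forall u v, P u v -> size u = size v.

Lemma sizeeq_cat P1 P2 : sizeeq P1 -> sizeeq P2 -> sizeeq (RCat P1 P2).
Proof.
move=> H1 H2 u v [u1 [u2 [v1 [v2 [-> [-> [/H1 E1 /H2 E2]]]]]]].
by rewrite !size_cat E1 E2.
Qed.
Lemma sizeeq_W x : sizeeq (RW x x). Proof. by move=> u v [-> ->]. Qed.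
Lemma sizeeq_W1 x y : sizeeq (RW [:: x] [:: y]). Proof. by move=> u v [-> ->]. Qed.
Lemma sizeeq_D S : sizeeq (RD S). Proof. by move=> u v [_ ->]. Qed.

Section P.
Variable pad : seq B -> seq B -> seq T.

Lemma pad_or P1 P2 : regular (padlang pad P1) -> regular (padlang pad P2) ->
  regular (padlang pad (ROr P1 P2)).
Proof.
move=> R1 R2; apply: regular_ext (regular_or R1 R2) => w; split.
  by case=> [[u [v [H ->]]]|[u [v [H ->]]]]; exists u, v; split=> //; [left|right].
by move=> [u [v [[H|H] ->]]]; [left|right]; exists u, v.
Qed.

Lemma pad_W x y : regular (padlang pad (RW x y)).
Proof.
apply: regular_ext (regular_word (pad x y)) => w; split.
  by move=> ->; exists x, y.
by move=> [u [v [[-> ->] ->]]].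
Qed.

Lemma pad_ext (P1 P2 : rl) : (forall u v, P1 u v <-> P2 u v) ->
  regular (padlang pad P1) -> regular (padlang pad P2).
Proof.
move=> E; apply: regular_ext => w; split; move=> [u [v [H ->]]]; exists u, v;
  split=> //; by apply/E.
Qed.
End P.

Lemma padR_D S : regular (padlang (@deltaR B) (RD S)).
Proof.
apply: regular_ext (regular_diag S) => w; split.
  by move=> [p [Sp ->]]; exists p, p; rewrite deltaR_diag.
by move=> [u [v [[Su ->] ->]]]; exists u; rewrite deltaR_diag.
Qed.

Lemma padL_D S : regular (padlang (@deltaL B) (RD S)).
Proof.
apply: regular_ext (regular_diag S) => w; split.
  by move=> [p [Sp ->]]; exists p, p; rewrite deltaL_diag.
by move=> [u [v [[Su ->] ->]]]; exists u; rewrite deltaL_diag.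
Qed.

Lemma padR_cat P1 P2 : sizeeq P1 -> regular (padlang (@deltaR B) P1) ->
  regular (padlang (@deltaR B) P2) -> regular (padlang (@deltaR B) (RCat P1 P2)).
Proof.
move=> S R1 R2; apply: regular_ext (regular_cat R1 R2) => w; split.
  move=> [w1 [w2 [-> [[u1 [v1 [H1 ->]]] [u2 [v2 [H2 ->]]]]]]].
  exists (u1 ++ u2), (v1 ++ v2); rewrite deltaR_cat ?(S _ _ H1) //; split=> //.
  by exists u1, u2, v1, v2.
move=> [u [v [[u1 [u2 [v1 [v2 [-> [-> [H1 H2]]]]]]] ->]]].
rewrite deltaR_cat ?(S _ _ H1) //; exists (deltaR u1 v1), (deltaR u2 v2); split=> //.
by split; [exists u1, v1|exists u2, v2].
Qed.

Lemma padL_cat P1 P2 : sizeeq P2 -> regular (padlang (@deltaL B) P1) ->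
  regular (padlang (@deltaL B) P2) -> regular (padlang (@deltaL B) (RCat P1 P2)).
Proof.
move=> S R1 R2; apply: regular_ext (regular_cat R1 R2) => w; split.
  move=> [w1 [w2 [-> [[u1 [v1 [H1 ->]]] [u2 [v2 [H2 ->]]]]]]].
  exists (u1 ++ u2), (v1 ++ v2); rewrite deltaL_cat ?(S _ _ H2) //; split=> //.
  by exists u1, u2, v1, v2.
move=> [u [v [[u1 [u2 [v1 [v2 [-> [-> [H1 H2]]]]]]] ->]]].
rewrite deltaL_cat ?(S _ _ H2) //; exists (deltaL u1 v1), (deltaL u2 v2); split=> //.
by split; [exists u1, v1|exists u2, v2].
Qed.

Lemma frame (pad : seq B -> seq B -> seq T)
  (Hf : forall u v, pmap (fun p : T => p.1) (pad u v) = u)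
  (Hs : forall u v, pmap (fun p : T => p.2) (pad u v) = v)
  (A : seq B -> Prop) (E R : rl) :
  regular A -> regular (padlang pad R) ->
  (forall u v, R u v -> E u v) ->
  (forall u, A u -> exists v, A v /\ E u v /\ R u v) ->
  (forall u v v', A u -> A v -> A v' -> E u v -> E u v' -> v = v') ->
  regular (padlang pad (fun u v => A u /\ A v /\ E u v)).
Proof.
move=> RA RR S C U; apply: (pad_frame Hf Hs (Q := padlang pad R)) => //.
  by move=> w [u [v [H ->]]]; exists u, v; split=> //; apply: S.
move=> u v Au Av Euv; have [v' [Av' [E' R']]] := C u Au.
by exists u, v; split=> //; rewrite (U _ _ _ Au Av Av' Euv E').
Qed.

End Comb.

Lemma regular_L : regular (fun w : seq gen => ASb w).
Proof.
have R : regular (fun w : seq gen => ASb (rev w)).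
  exists (bool * option gen * option gen * bool)%type, init, dd, okq => w.
  by rewrite -st_ok /st -foldl_rev revK.
apply: regular_ext (regular_rev R) => w; by rewrite revK.
Qed.

Definition ast (b : bool) (q : state) : state :=
  if b then q else (okq q, Some ga, fq q, gq q).

Lemma st_nseq k X : st (nseq k ga ++ X) = ast (k == 0) (st X).
Proof.
elim: k => [|k IH] //=; rewrite -/(st _) IH /ast.
by case: k IH => [|k] //= _; rewrite /dd /= andbT.
Qed.

Lemma st_cat p s : st (p ++ s) = foldr (fun t q => dd q t) (st s) p.
Proof. by rewrite /st foldr_cat. Qed.

Lemma ASb_same p s s' : st s = st s' -> ASb (p ++ s) = ASb (p ++ s').
Proof. by move=> E; rewrite -!st_ok !st_cat E. Qed.

Lemma ASb_suffix p s : ASb (p ++ s) -> ASb s.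
Proof. by elim: p => //= t p IH /andP [_ /IH]. Qed.

Lemma F_a q t : ~~ isb t -> dd (dd q ga) t = dd q t.
Proof. by case: t => // _; case: q => [[[ok h] f] g]; rewrite /dd /= ?andbT. Qed.

Lemma F_c c : isc c -> dd init c = init. Proof. by case: c. Qed.

Lemma F_b1 b t k0 : isb b -> t != ga -> ~~ (isc t && (idx t == idx b) && (idx b != 1)) ->
  dd (ast k0 (dd init b)) t = dd (ast k0 init) t.
Proof. by case: b => //; case: t => //; case: k0. Qed.

Lemma F_b2 b t k0 : isb b -> isc t -> idx t = idx b ->
  dd (ast k0 (dd init gb1)) gc1 = dd (ast k0 init) t.
Proof. by case: b => //; case: t => //; case: k0. Qed.

Lemma F_d0 t d : ~~ isb t -> isd d -> dd (dd init d) t = dd init t.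
Proof. by case: d => //; case: t. Qed.

Lemma F_dB k0 t y : t != ga -> isb y -> okq (dd (ast k0 (dd init y)) t) ->
  dd (ast k0 (dd (dd init gd1) gb1)) t = dd (ast k0 (dd init y)) t.
Proof. by case: y => //; case: t => //; case: k0. Qed.

Lemma F_dC k0 t y z : isc t -> idx t = idx y -> isb y -> isd z ->
  okq (dd (ast k0 (dd init y)) t) ->
  dd (ast k0 (dd (dd init gd1) gb1)) (cL (idx z)) = dd (ast k0 (dd init y)) t.
Proof. by case: z => //; case: y => //; case: t => //; case: k0. Qed.

Lemma F_dA k0 t y d : t != ga -> isb y -> isd d -> idx y != idx d ->
  ~~ (isc t && (idx t == idx y)) ->
  dd (ast k0 (dd (dd init d) y)) t = dd (ast k0 (dd init y)) t.
Proof. by case: d => //; case: y => //; case: t => //; case: k0. Qed.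

Lemma dec_b u : exists p bs, u = p ++ bs /\ all isb bs /\
  (p = [::] \/ exists p' t, p = rcons p' t /\ ~~ isb t).
Proof.
elim/last_ind: u => [|u t [p [bs [-> [Hb Hp]]]]]; first by exists [::], [::]; do 2 split=> //; left.
case Ht: (isb t).
  exists p, (rcons bs t); rewrite rcons_cat; split=> //; split=> //.
  by rewrite -cats1 all_cat Hb /= Ht.
exists (rcons (p ++ bs) t), [::]; rewrite cats0; split=> //; split=> //.
by right; exists (p ++ bs), t; rewrite Ht.
Qed.

Lemma dec_a p : exists p2 k, p = p2 ++ nseq k ga /\
  (p2 = [::] \/ exists p3 t, p2 = rcons p3 t /\ t != ga).
Proof.
elim/last_ind: p => [|p t [p2 [k [-> Hp]]]]; first by exists [::], 0; split=> //; left.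
case Ht: (t == ga).
  exists p2, k.+1; move/eqP: Ht => ->; split=> //.
  by rewrite -cats1 -catA; congr (_ ++ _); elim: k {Hp} => //= k <-.
exists (rcons (p2 ++ nseq k ga) t), 0; rewrite cats0; split=> //.
by right; exists (p2 ++ nseq k ga), t; rewrite Ht.
Qed.

Notation rl := (seq gen -> seq gen -> Prop).
Definition Dg : rl := RD predT.
Definition Ra : rl := RD isa.
Definition BSh : rl := fun u v => all isb u /\ v = ga :: u.
Definition RCy t y : rl :=
  RCat Dg (RCat (RW [:: cL y] [:: cL (idx t)])
     (RCat Ra (RCat (RW [:: bL y] [:: gb1]) (RW [::] [:: gd1])))).

Definition RR (x : option gen) : rl :=
  match x with
  | None => Dg
  | Some t =>
    if isa t then RCat Dg BSh
    else if isc t then RCat Dg (RW [::] [:: t])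
    else if isb t then ROr (RCat Dg (RW [::] [:: t]))
       (RCat Dg (RCat (RW [:: cL (idx t)] [:: gc1]) (RCat Ra (RW [::] [:: gb1]))))
    else ROr (RCat Dg (RW [::] [:: t]))
      (ROr (RCat Dg (RCat (RW [:: bL (idx t)] [:: gb1]) (RW [::] [:: gd1])))
        (ROr (RCy t 1) (ROr (RCy t 2) (RCy t 3))))
  end.

Lemma allT (u : seq gen) : all predT u. Proof. by elim: u. Qed.

Lemma Dg_refl u : Dg u u. Proof. by split; [apply: allT|]. Qed.
Lemma RW_refl (x y : seq gen) : RW x y x y. Proof. by []. Qed.

Lemma all_isa p : all isa p -> p = nseq (size p) ga.
Proof. by elim: p => [|[] p IH] //= /IH {1}->. Qed.

Lemma all_isa_nseq k : all isa (nseq k ga).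
Proof. by elim: k. Qed.

Lemma right_c u t : ASb u -> isc t ->
  exists v, ASb v /\ EQ (u ++ [:: t]) v /\ RCat Dg (RW [::] [:: t]) u v.
Proof.
move=> Au ct; exists (u ++ [:: t]); split.
  rewrite (ASb_same u (s := [:: t]) (s' := [::])) ?cats0 //; exact: F_c.
split; first exact: EQ_refl.
by exists u, [::], u, [:: t]; rewrite cats0; do 3 split=> //; apply: Dg_refl.
Qed.

Lemma right_a u : ASb u ->
  exists v, ASb v /\ EQ (u ++ [:: ga]) v /\ RCat Dg BSh u v.
Proof.
move=> Au; have [p [bs [Eu [Hb Hp]]]] := dec_b u; subst u.
exists (p ++ ga :: bs); split.
  case: Hp Au => [->|[p' [t' [-> nb]]]] Au.
    by rewrite cat0s ASb_cons lm_a eqxx (ASb_suffix Au).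
  move: Au; rewrite -!cats1 -!catA /=.
  rewrite (ASb_same p' (s := [:: t', ga & bs]) (s' := t' :: bs)) //; exact: (F_a _ nb).
split; first by rewrite -catA; apply: (EQ_cat (EQ_refl p) (EQ_bsa Hb)).
exists p, bs, p, (ga :: bs); do 3 split=> //; by apply: Dg_refl.
Qed.

Lemma st_nseq0 k : st (nseq k ga) = ast (k == 0) init.
Proof. by rewrite -[nseq k ga]cats0 st_nseq. Qed.

Lemma cL_idx t : isc t -> cL (idx t) = t. Proof. by case: t. Qed.
Lemma bL_idx t : isb t -> bL (idx t) = t. Proof. by case: t. Qed.

Lemma right_b u t : ASb u -> isb t ->
  exists v, ASb v /\ EQ (u ++ [:: t]) v /\
   ROr (RCat Dg (RW [::] [:: t]))
       (RCat Dg (RCat (RW [:: cL (idx t)] [:: gc1]) (RCat Ra (RW [::] [:: gb1])))) u v.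
Proof.
move=> Au tb; have [p2 [k [Eu Hp]]] := dec_a u; subst u.
case: Hp Au => [->|[p3 [t' [-> nt]]]] Au.
  exists (nseq k ga ++ [:: t]); split; first by rewrite ASb_nseq; case: t tb.
  split; first exact: EQ_refl.
  by left; exists (nseq k ga), [::], (nseq k ga), [:: t]; rewrite cats0; do 3 split=> //; apply: Dg_refl.
move: Au; rewrite -cats1 -catA /= => Au.
case E: (isc t' && (idx t' == idx t) && (idx t != 1)).
  have [/andP [t'c /eqP Ei] _] := andP E.
  exists (p3 ++ gc1 :: nseq k ga ++ [:: gb1]); split.
    rewrite (ASb_same p3 (s' := t' :: nseq k ga)) //.
    change (dd (st (nseq k ga ++ [:: gb1])) gc1 = dd (st (nseq k ga)) t').
    by rewrite st_nseq st_nseq0; apply: (F_b2 (b := t)).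
  split.
    rewrite -catA; apply: (EQ_cat (EQ_refl p3)); rewrite /=.
    by apply: EQ_cab.
  right; exists p3, (t' :: nseq k ga), p3, (gc1 :: nseq k ga ++ [:: gb1]).
  do 3 split=> //; first exact: Dg_refl.
  exists [:: t'], (nseq k ga), [:: gc1], (nseq k ga ++ [:: gb1]); do 2 split=> //.
  split; first by rewrite /RW -Ei cL_idx.
  exists (nseq k ga), [::], (nseq k ga), [:: gb1]; rewrite cats0; do 3 split=> //.
  by split; [apply: all_isa_nseq|].
exists (p3 ++ t' :: nseq k ga ++ [:: t]); split.
  rewrite (ASb_same p3 (s' := t' :: nseq k ga)) //.
  change (dd (st (nseq k ga ++ [:: t])) t' = dd (st (nseq k ga)) t').
  by rewrite st_nseq st_nseq0; apply: F_b1; rewrite // E.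
split; first by rewrite -catA; exact: EQ_refl.
left; exists (p3 ++ t' :: nseq k ga), [::], (p3 ++ t' :: nseq k ga), [:: t].
by rewrite cats0 -catA; do 3 split=> //; apply: Dg_refl.
Qed.

Definition Rd t : rl := ROr (RCat Dg (RW [::] [:: t]))
      (ROr (RCat Dg (RCat (RW [:: bL (idx t)] [:: gb1]) (RW [::] [:: gd1])))
        (ROr (RCy t 1) (ROr (RCy t 2) (RCy t 3)))).

Lemma Rd1 u t : Rd t u (u ++ [:: t]).
Proof. by left; exists u, [::], u, [:: t]; rewrite cats0; do 3 split=> //; apply: Dg_refl. Qed.

Lemma ok_suffix p s : ASb (p ++ s) -> okq (st s). Proof. by rewrite st_ok; apply: ASb_suffix. Qed.

Lemma right_d u t : ASb u -> isd t ->
  exists v, ASb v /\ EQ (u ++ [:: t]) v /\ Rd t u v.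
Proof.
move=> Au td; case/lastP: u Au => [|p y] Au.
  exists [:: t]; split; first by case: t td.
  by split; [exact: EQ_refl|apply: (Rd1 [::])].
case yb: (isb y); last first.
  exists (rcons p y ++ [:: t]); split; last by split; [exact: EQ_refl|apply: Rd1].
  move: Au; rewrite -!cats1 -!catA /= (ASb_same p (s := [:: y; t]) (s' := [:: y])) //.
  change (dd (dd init t) y = dd init y); by rewrite F_d0 // yb.
have [p2 [k [Ep Hp]]] := dec_a p; subst p.
move: Au; rewrite -!cats1 -!catA /= => Au.
case Ei: (idx y == idx t).
  exists (p2 ++ nseq k ga ++ [:: gb1; gd1]); split; last split.
  - case: Hp Au => [->|[p3 [t' [-> nt]]]] Au.
      by rewrite cat0s ASb_nseq.
    move: Au; rewrite -!cats1 -!catA /= => Au.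
    rewrite (ASb_same p3 (s' := t' :: nseq k ga ++ [:: y])) //.
    change (dd (st (nseq k ga ++ [:: gb1; gd1])) t' = dd (st (nseq k ga ++ [:: y])) t').
    rewrite !st_nseq; apply: F_dB => //.
    by have := ok_suffix Au; rewrite /= st_nseq.
    rewrite !catA; apply: (EQ_cat (EQ_refl _)); exact: EQ_bd yb td (eqP Ei).
  - right; left; exists (p2 ++ nseq k ga), [:: y], (p2 ++ nseq k ga), [:: gb1; gd1].
    rewrite -!catA; do 3 split=> //; first exact: Dg_refl.
    exists [:: y], [::], [:: gb1], [:: gd1]; do 3 split=> //.
    by rewrite /RW -(eqP Ei) bL_idx.
case: Hp Au => [->|[p3 [t' [-> nt]]]] Au.
  exists (nseq k ga ++ [:: y; t]); split; last by split; [exact: EQ_refl|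
    have := Rd1 (nseq k ga ++ [:: y]) t; rewrite -catA].
  by rewrite ASb_nseq; clear Au; case: y yb Ei => //; case: t td.
move: Au; rewrite -!cats1 -!catA /= => Au.
have okA : okq (dd (ast (k == 0) (dd init y)) t').
  by have := ok_suffix Au; rewrite /= st_nseq.
case Ec: (isc t' && (idx t' == idx y)).
  have [t'c /eqP Ety] := andP Ec.
  exists (p3 ++ cL (idx t) :: nseq k ga ++ [:: gb1; gd1]); split; last split.
  - rewrite (ASb_same p3 (s' := t' :: nseq k ga ++ [:: y])) //.
    change (dd (st (nseq k ga ++ [:: gb1; gd1])) (cL (idx t)) = dd (st (nseq k ga ++ [:: y])) t').
    by rewrite !st_nseq; apply: F_dC.
  - apply: (EQ_cat (EQ_refl p3)).
    apply: (@EQ_trans _ (gc1 :: nseq k ga ++ [:: gb1; t])).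
      by have := EQ_cat (EQ_cab k yb t'c (esym Ety)) (EQ_refl [:: t]); rewrite /= -!catA.
    exact: EQ_cabd.
  - have HR : RCy t (idx y) (p3 ++ t' :: nseq k ga ++ [:: y])
                            (p3 ++ cL (idx t) :: nseq k ga ++ [:: gb1; gd1]).
      exists p3, (t' :: nseq k ga ++ [:: y]), p3, (cL (idx t) :: nseq k ga ++ [:: gb1; gd1]).
      do 3 split=> //; first exact: Dg_refl.
      exists [:: t'], (nseq k ga ++ [:: y]), [:: cL (idx t)], (nseq k ga ++ [:: gb1; gd1]).
      do 3 split=> //; first by rewrite /RW -Ety cL_idx.
      exists (nseq k ga), [:: y], (nseq k ga), [:: gb1; gd1]; do 3 split=> //.
        by split; [apply: all_isa_nseq|].
      exists [:: y], [::], [:: gb1], [:: gd1]; do 3 split=> //.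
      by rewrite /RW bL_idx.
    right; right; move: HR; clear -yb; case: y yb => // _ HR.
    + by left.
    + by right; left.
    + by right; right.
exists (p3 ++ t' :: nseq k ga ++ [:: y; t]); split; last split.
- rewrite (ASb_same p3 (s' := t' :: nseq k ga ++ [:: y])) //.
  change (dd (st (nseq k ga ++ [:: y; t])) t' = dd (st (nseq k ga ++ [:: y])) t').
  by rewrite !st_nseq; apply: F_dA; rewrite // ?Ei ?Ec.
- exact: EQ_refl.
- by have := Rd1 (p3 ++ t' :: nseq k ga ++ [:: y]) t; rewrite -!catA /= -!catA.
Qed.

Lemma right_shape x u : ASb u -> exists v, ASb v /\ EQ (u ++ letter x) v /\ RR x u v.
Proof.
move=> Au; case: x => [t|]; last first.
  exists u; rewrite /= cats0; split=> //; split; [exact: EQ_refl|exact: Dg_refl].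
case: t; rewrite /RR /=.
- exact: right_a.
- by apply: right_b.
- by apply: right_b.
- by apply: right_b.
- by apply: right_c.
- by apply: right_c.
- by apply: right_c.
- by apply: right_d.
- by apply: right_d.
- by apply: right_d.
Qed.

Lemma S_catD (X : rl) x : (forall u v, X u v -> EQ (u ++ x) v) ->
  forall u v, RCat Dg X u v -> EQ (u ++ x) v.
Proof.
move=> H u v [u1 [u2 [v1 [v2 [-> [-> [[_ ->] H2]]]]]]].
by rewrite -catA; apply: (EQ_cat (EQ_refl u1)); apply: H.
Qed.

Lemma Ra_inv u v : Ra u v -> exists k, u = nseq k ga /\ v = nseq k ga.
Proof. by move=> [/all_isa -> ->]; exists (size u). Qed.

Lemma RR_sound x u v : RR x u v -> EQ (u ++ letter x) v.
Proof.
case: x => [t|]; last by move=> [_ ->]; rewrite cats0; exact: EQ_refl.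
have Hw : forall u v, RCat Dg (RW [::] [:: t]) u v -> EQ (u ++ [:: t]) v.
  by apply: S_catD => u0 v0 [-> ->]; exact: EQ_refl.
case Ea: (isa t).
  have -> : t = ga by clear Hw; case: t Ea.
  rewrite /RR /=; apply: S_catD => u0 v0 [Hb ->]; exact: EQ_bsa.
case Ec: (isc t); first by rewrite /RR Ea Ec /=; apply: Hw.
case Eb: (isb t).
  rewrite /RR Ea Ec Eb /= => -[|]; first exact: Hw.
  apply: S_catD => u0 v0 [u1 [u2 [v1 [v2 [-> [-> [[-> ->]]]]]]]].
  move=> [u3 [u4 [v3 [v4 [-> [-> [/Ra_inv [k [-> ->]] [-> ->]]]]]]]].
  rewrite cats0 /=; apply: EQ_cab => //; by clear Hw; case: t Ea Ec Eb.
have Ed : isd t by clear Hw; case: t Ea Ec Eb.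
rewrite /RR Ea Ec Eb /= => -[|[|]]; first exact: Hw.
  apply: S_catD => u0 v0 [u1 [u2 [v1 [v2 [-> [-> [[-> ->] [-> ->]]]]]]]].
  apply: EQ_bd => //; by clear Hw; case: t Ea Ec Eb Ed.
have HC : forall y, y \in [:: 1; 2; 3] -> forall u v, RCy t y u v -> EQ (u ++ [:: t]) v.
  move=> y Hy; apply: S_catD => u0 v0 [u1 [u2 [v1 [v2 [-> [-> [[-> ->]]]]]]]].
  move=> [u3 [u4 [v3 [v4 [-> [-> [/Ra_inv [k [-> ->]]]]]]]]].
  move=> [u5 [u6 [v5 [v6 [-> [-> [[-> ->] [-> ->]]]]]]]].
  rewrite /=; apply: (@EQ_trans _ (gc1 :: nseq k ga ++ [:: gb1; t])).
    have := EQ_cat (EQ_cab k (_ : isb (bL y)) (_ : isc (cL y)) _) (EQ_refl [:: t]).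
    rewrite /= -!catA; apply; by move: Hy; rewrite !inE => /or3P [] /eqP ->.
  exact: EQ_cabd.
by case=> [|[]]; apply: HC.
Qed.

Lemma regBSh : regular (padlang (@deltaR gen) BSh).
Proof.
apply: pad_LR; first by move=> u v [_ ->].
apply: (pad_ext (P1 := RCat (RW [::] [:: ga]) (RD isb))).
  move=> u v; split.
    by move=> [u1 [u2 [v1 [v2 [-> [-> [[-> ->] [H ->]]]]]]]].
  by move=> [H ->]; exists [::], u, [:: ga], u.
apply: padL_cat; [exact: sizeeq_D|exact: pad_W|exact: padL_D].
Qed.

Ltac regR := repeat first [apply: pad_or | apply: padR_cat | apply: padR_D |
  apply: pad_W | apply: sizeeq_cat | apply: sizeeq_D | apply: sizeeq_W1 | apply: regBSh].

Lemma regR_RR x : regular (padlang (@deltaR gen) (RR x)).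
Proof.
case: x => [t|]; last exact: padR_D.
by case: t; rewrite /RR /=; regR.
Qed.

Definition dL n := match n with 1 => gd1 | 2 => gd2 | _ => gd3 end.
Lemma dL_idx t : isd t -> dL (idx t) = t. Proof. by case: t. Qed.

Definition RCz t z : rl :=
  RCat (RW [::] [:: cL z]) (RCat Ra (RCat (RW [:: bL (idx t)] [:: gb1])
     (RCat (RW [:: dL z] [:: gd1]) Dg))).

Definition RL (x : option gen) : rl :=
  match x with
  | None => Dg
  | Some t =>
    if isb t then
      ROr (RCat (RW [::] [:: t]) Dg)
      (ROr (RCat (RW [::] [:: ga]) (RCat Ra (RCat (RW [:: ga] [:: t]) Dg)))
      (ROr (RCat (RW [::] [:: gb1]) (RCat (RW [:: dL (idx t)] [:: gd1]) Dg))
           (RCat (RW [::] [:: ga]) (RCat Ra (RCat (RW [:: ga] [:: gb1])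
               (RCat (RW [:: dL (idx t)] [:: gd1]) Dg))))))
    else if isc t then
      ROr (RCat (RW [::] [:: t]) Dg)
      (ROr (RCat (RW [::] [:: gc1]) (RCat Ra (RCat (RW [:: bL (idx t)] [:: gb1]) Dg)))
      (ROr (RCz t 1) (ROr (RCz t 2) (RCz t 3))))
    else RCat (RW [::] [:: t]) Dg
  end.

Ltac regL := repeat first [apply: pad_or | apply: padL_cat | apply: padL_D |
  apply: pad_W | apply: sizeeq_cat | apply: sizeeq_D | apply: sizeeq_W1].

Lemma regL_RL x : regular (padlang (@deltaL gen) (RL x)).
Proof.
case: x => [t|]; last exact: padL_D.
by case: t; rewrite /RL /=; regL.
Qed.

Lemma nseq_shift k (s : seq gen) : nseq k ga ++ ga :: s = ga :: nseq k ga ++ s.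
Proof. by elim: k => //= k ->. Qed.

Lemma RW1 (t : gen) u : RCat (RW [::] [:: t]) Dg u (t :: u).
Proof. by exists [::], u, [:: t], u; do 3 split=> //; apply: Dg_refl. Qed.

Lemma left_b t k p : isb t -> noA p -> RL (Some t) (nseq k ga ++ p) (nseq k ga ++ lb t p).
Proof.
move=> tb np; rewrite /RL tb.
have Hnf : forall p, lb t p = t :: p ->
   ROr (RCat (RW [::] [:: t]) Dg) (RCat (RW [::] [:: ga]) (RCat Ra (RCat (RW [:: ga] [:: t]) Dg)))
     (nseq k ga ++ p) (nseq k ga ++ lb t p).
  move=> p0 ->; case: k => [|k]; first by left; apply: RW1.
  right; exists [::], (nseq k ga ++ ga :: p0), [:: ga], (nseq k ga ++ t :: p0).
  split; first by rewrite nseq_shift. do 2 split=> //.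
  exists (nseq k ga), (ga :: p0), (nseq k ga), (t :: p0); do 3 split=> //.
    by split; [apply: all_isa_nseq|].
  by exists [:: ga], p0, [:: t], p0; do 3 split=> //; apply: Dg_refl.
case: p np => [|d q] np.
  by move: (Hnf [::] erefl) => [H|H]; [left|right; left].
rewrite [lb t _]/=; case: ifP => E; last first.
  have H0 : lb t (d :: q) = t :: d :: q by rewrite /= E.
  by move: (Hnf (d :: q) H0); rewrite H0 => -[H|H]; [left|right; left].
have [/andP [dd_ /eqP Ei] _] := andP E.
have Hd : dL (idx t) = d by rewrite -Ei dL_idx.
right; right; clear Hnf; case: k => [|k].
  left; exists [::], (d :: q), [:: gb1], (gd1 :: q); do 3 split=> //.
  exists [:: d], q, [:: gd1], q; do 3 split=> //; [by rewrite /RW Hd|apply: Dg_refl].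
right; exists [::], (nseq k ga ++ ga :: d :: q), [:: ga], (nseq k ga ++ [:: gb1, gd1 & q]).
split; first by rewrite nseq_shift. do 2 split=> //.
exists (nseq k ga), [:: ga, d & q], (nseq k ga), [:: gb1, gd1 & q]; do 3 split=> //.
  by split; [apply: all_isa_nseq|].
exists [:: ga], (d :: q), [:: gb1], (gd1 :: q); do 3 split=> //.
exists [:: d], q, [:: gd1], q; do 3 split=> //; [by rewrite /RW Hd|apply: Dg_refl].
Qed.

Lemma left_c t k p : isc t -> noA p -> RL (Some t) (nseq k ga ++ p) (lc t k p).
Proof.
move=> tc np; have tb : isb t = false by case: t tc.
rewrite /RL tb tc /lc; case: p np => [|y q] np; first by left; apply: RW1.
case: ifP => E; last by left; apply: RW1.
have [yb /eqP Ei] := andP E.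
have Hy : bL (idx t) = y by rewrite -Ei bL_idx.
have A2 : forall q, RCat (RW [::] [:: gc1]) (RCat Ra (RCat (RW [:: bL (idx t)] [:: gb1]) Dg))
    (nseq k ga ++ y :: q) (gc1 :: nseq k ga ++ gb1 :: q).
  move=> q0; exists [::], (nseq k ga ++ y :: q0), [:: gc1], (nseq k ga ++ gb1 :: q0).
  do 3 split=> //.
  exists (nseq k ga), (y :: q0), (nseq k ga), (gb1 :: q0); do 3 split=> //.
    by split; [apply: all_isa_nseq|].
  exists [:: y], q0, [:: gb1], q0; do 3 split=> //; [by rewrite /RW Hy|apply: Dg_refl].
case: q np => [|z q'] np; first by right; left; apply: A2.
case: ifP => Ez; last by right; left; apply: A2.
have [zd zn1] := andP Ez.
have HC : RCz t (idx z) (nseq k ga ++ [:: y, z & q'])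
     (cL (idx z) :: nseq k ga ++ [:: gb1, gd1 & q']).
  exists [::], (nseq k ga ++ [:: y, z & q']), [:: cL (idx z)], (nseq k ga ++ [:: gb1, gd1 & q']).
  do 3 split=> //.
  exists (nseq k ga), [:: y, z & q'], (nseq k ga), [:: gb1, gd1 & q']; do 3 split=> //.
    by split; [apply: all_isa_nseq|].
  exists [:: y], (z :: q'), [:: gb1], (gd1 :: q'); do 3 split=> //; first by rewrite /RW Hy.
  exists [:: z], q', [:: gd1], q'; do 3 split=> //; [by rewrite /RW dL_idx|apply: Dg_refl].
right; right; move: HC; clear -zd zn1; case: z zd zn1 => // _ _ HC.
- by right; left.
- by right; right.
Qed.

Lemma left_shape x u : RL x u (if x is Some t then lm t u else u).
Proof.
case: x => [t|]; last exact: Dg_refl.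
have [k [p [np ->]]] : exists k p, noA p /\ u = nseq k ga ++ p.
  by exists (cnta u), (dropa u); split; [apply: noA_dropa|apply: nseq_dropa].
rewrite lm_nseq //; case: t.
- by rewrite /RL /=; apply: RW1.
- exact: left_b.
- exact: left_b.
- exact: left_b.
- exact: left_c.
- exact: left_c.
- exact: left_c.
- by rewrite /RL /=; apply: RW1.
- by rewrite /RL /=; apply: RW1.
- by rewrite /RL /=; apply: RW1.
Qed.

Lemma EQ_bak2 b k p : isb b -> EQ (b :: nseq k ga ++ p) (nseq k ga ++ b :: p).
Proof. by move=> bb; have := EQ_cat (EQ_bak k bb) (EQ_refl p); rewrite -catA. Qed.

Lemma RW1_inv (t : gen) u v : RCat (RW [::] [:: t]) Dg u v -> v = t :: u.
Proof. by move=> [u1 [u2 [v1 [v2 [-> [-> [[-> ->] [_ ->]]]]]]]]. Qed.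

Lemma RL_sound x u v : RL x u v -> EQ (letter x ++ u) v.
Proof.
case: x => [t|]; last by move=> [_ ->]; exact: EQ_refl.
rewrite /RL; case Eb: (isb t).
  case=> [/RW1_inv ->|[|[|]]]; first exact: EQ_refl.
  - move=> [u1 [u2 [v1 [v2 [-> [-> [[-> ->]]]]]]]].
    move=> [u3 [u4 [v3 [v4 [-> [-> [/Ra_inv [k [-> ->]]]]]]]]].
    move=> [u5 [u6 [v5 [v6 [-> [-> [[-> ->] [_ ->]]]]]]]].
    rewrite /= nseq_shift -[ga :: nseq k ga ++ _]/(nseq k.+1 ga ++ _).
    rewrite -[ga :: nseq k ga ++ _]/(nseq k.+1 ga ++ _).
    exact: EQ_bak2.
  - move=> [u1 [u2 [v1 [v2 [-> [-> [[-> ->]]]]]]]].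
    move=> [u3 [u4 [v3 [v4 [-> [-> [[-> ->] [_ ->]]]]]]]].
    rewrite /=; apply: (EQ_cat (EQ_bd Eb (_ : isd (dL (idx t))) _) (EQ_refl u4));
      by case: t Eb.
  - move=> [u1 [u2 [v1 [v2 [-> [-> [[-> ->]]]]]]]].
    move=> [u3 [u4 [v3 [v4 [-> [-> [/Ra_inv [k [-> ->]]]]]]]]].
    move=> [u5 [u6 [v5 [v6 [-> [-> [[-> ->]]]]]]]].
    move=> [u7 [u8 [v7 [v8 [-> [-> [[-> ->] [_ ->]]]]]]]].
    rewrite /= nseq_shift -[ga :: nseq k ga ++ _]/(nseq k.+1 ga ++ _).
    rewrite -[ga :: nseq k ga ++ _]/(nseq k.+1 ga ++ _).
    apply: EQ_trans (EQ_bak2 _ _ Eb) _.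
    apply: (EQ_cat (EQ_refl _)).
    apply: (EQ_cat (EQ_bd Eb (_ : isd (dL (idx t))) _) (EQ_refl u8)); by case: t Eb.
case Ec: (isc t); last by move/RW1_inv ->; exact: EQ_refl.
case=> [/RW1_inv ->|[|]]; first exact: EQ_refl.
  move=> [u1 [u2 [v1 [v2 [-> [-> [[-> ->]]]]]]]].
  move=> [u3 [u4 [v3 [v4 [-> [-> [/Ra_inv [k [-> ->]]]]]]]]].
  move=> [u5 [u6 [v5 [v6 [-> [-> [[-> ->] [_ ->]]]]]]]].
  rewrite /=; apply: lc_sound => //; [by case: t Eb Ec|by case: t Eb Ec].
have HZ : forall z, z \in [:: 1; 2; 3] -> forall u v, RCz t z u v -> EQ (t :: u) v.
  move=> z Hz u0 v0 [u1 [u2 [v1 [v2 [-> [-> [[-> ->]]]]]]]].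
  move=> [u3 [u4 [v3 [v4 [-> [-> [/Ra_inv [k [-> ->]]]]]]]]].
  move=> [u5 [u6 [v5 [v6 [-> [-> [[-> ->]]]]]]]].
  move=> [u7 [u8 [v7 [v8 [-> [-> [[-> ->] [_ ->]]]]]]]].
  rewrite /=; apply: EQ_trans (lc_sound k _ Ec (_ : isb (bL (idx t))) _) _;
    try (by case: t Eb Ec).
  have := EQ_cabd k u8 (_ : isd (dL z)); rewrite /=.
  have -> : idx (dL z) = z by move: Hz; rewrite !inE => /or3P [] /eqP ->.
  apply; by move: Hz; rewrite !inE => /or3P [] /eqP ->.
by case=> [|[]]; apply: HZ.
Qed.

Definition phi (t : gen) : seq gen := [:: t].
Definition Lw (w : seq gen) : Prop := ASb w.

Lemma evalw_id u : evalw phi u = u.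
Proof. by elim: u => //= t u; rewrite /evalw /= => ->. Qed.

Lemma regRR a : regular (padlang (@deltaR gen) (Lright M_rel phi Lw a)).
Proof.
apply: (pad_ext (P1 := fun u v => Lw u /\ Lw v /\ EQ (u ++ letter a) v)).
  by move=> u v; rewrite /Lright !evalw_id.
apply: (frame (@fst_deltaR gen) (@snd_deltaR gen) regular_L (regR_RR a)).
- exact: RR_sound.
- exact: right_shape.
- move=> u v v' _ Av Av' E1 E2; apply: ASb_unique => //.
  exact: EQ_trans (EQ_sym E1) E2.
Qed.

Lemma regLL a : regular (padlang (@deltaL gen) (Lleft M_rel phi Lw a)).
Proof.
apply: (pad_ext (P1 := fun u v => Lw u /\ Lw v /\ EQ (letter a ++ u) v)).
  by move=> u v; rewrite /Lleft !evalw_id.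
apply: (frame (@fst_deltaL gen) (@snd_deltaL gen) regular_L (regL_RL a)).
- exact: RL_sound.
- move=> u Au; exists (if a is Some t then lm t u else u); split; last split.
  + by case: a => // t; apply: ASb_lm.
  + by case: a => [t|]; [apply: lm_sound|exact: EQ_refl].
  + exact: left_shape.
- move=> u v v' _ Av Av' E1 E2; apply: ASb_unique => //.
  exact: EQ_trans (EQ_sym E1) E2.
Qed.

Lemma LR_eqL u v : Lright M_rel phi Lw None u v <-> Lleft M_rel phi Lw None u v.
Proof. by rewrite /Lright /Lleft /= cats0. Qed.

Theorem proposition3p6 : biautomatic M_rel /\ automatic M_rel.
Proof.
have Hon : maps_onto M_rel phi Lw.
  move=> w; exists (nf w); rewrite evalw_id; split; first exact: ASb_nfw.
  exact: EQ_sym (nf_sound w).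
split; last by exists gen, phi, Lw; split; [exact: regular_L|split; [exact: Hon|exact: regRR]].
exists gen, phi, Lw; split; first exact: regular_L.
split; first exact: Hon.
move=> a; split; [exact: regRR| | |exact: regLL].
- case: a => [t|].
    apply: pad_LR; last exact: regLL.
    move=> u v [_ [_ E]]; move: E; rewrite !evalw_id => /EQ_size <-.
    by [].

  by apply: (pad_ext (P1 := Lright M_rel phi Lw None)); [move=> u v; apply: LR_eqL|exact: regRR].
- case: a => [t|].
    apply: pad_RL; last exact: regRR.
    move=> u v [_ [_ E]]; move: E; rewrite !evalw_id => /EQ_size <-.
    by rewrite size_cat addn1.
  apply: (pad_ext (P1 := Lleft M_rel phi Lw None)); last exact: regLL.
  by move=> u v; rewrite LR_eqL.
Qed.
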